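(* Let $n\ge 2$ be an integer and $k$ an integer with $0\le k\le n-1$. Then $$e_k\left(\left\{\csc^2\left(\tfrac{j\pi}{2n}\right) : j=1,\dots,n-1\right\}\right) = \frac{4^k\,(n+k)!\,(n-1)!}{(2k+1)!\,(n-k-1)!\,n!}.$$
   Context: $e_k(\alpha_1,\dots,\alpha_m)$ denotes the degree-$k$ elementary symmetric function of $\alpha_1,\dots,\alpha_m$ (with $e_0=1$). *)

(* Defs.v *)
From Stdlib Require Import Reals List Arith.
Open Scope R_scope.

Fixpoint esym (k : nat) (l : list R) : R :=
  match k, l with
  | O, _ => 1
  | S _, nil => 0
  | S k', x :: l' => esym k l' + x * esym k' l'
  end.

Definition csc2 (x : R) : R := / (sin x ^ 2).

(* Main.v *)
Require Import Defs.
From Stdlib Require Import Reals List Arith Lia Lra.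
Open Scope R_scope.

Lemma sin_step n x : sin (INR (S (S n)) * x) =
  (cos x + cos x) * sin (INR (S n) * x) - sin (INR n * x).
Proof.
rewrite !S_INR.
replace ((INR n + 1 + 1) * x) with ((INR n + 1) * x + x) by ring.
replace (INR n * x) with ((INR n + 1) * x - x) by ring.
rewrite sin_plus, sin_minus. ring.
Qed.

Lemma sin_INR1 x : sin (INR 1 * x) = sin x.
Proof. simpl INR; rewrite Rmult_1_l; reflexivity. Qed.

Lemma sin_INR0 x : sin (INR 0 * x) = 0.
Proof. simpl INR; rewrite Rmult_0_l; apply sin_0. Qed.

Lemma sin_INR_PI k : sin (INR k * PI) = 0.
Proof.
induction k. apply sin_INR0.
rewrite S_INR, Rmult_plus_distr_r, Rmult_1_l, neg_sin, IHk; ring.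
Qed.

Lemma theta_bounds n j : (2 <= n)%nat -> (1 <= j)%nat -> (j <= n - 1)%nat ->
  0 < INR j * PI / (2 * INR n) < PI / 2.
Proof.
intros hn hj1 hj2.
assert (Hjn : INR j < INR n) by (apply lt_INR; lia).
assert (Hj : 0 < INR j) by (apply lt_0_INR; lia).
assert (Hpi := PI_RGT_0).
assert (Hv : 0 < / (2 * INR n)) by (apply Rinv_0_lt_compat; lra).
assert (Hv1 : INR n * / (2 * INR n) = /2) by (field; lra).
unfold Rdiv. split.
- apply Rmult_lt_0_compat; [apply Rmult_lt_0_compat|]; lra.
- assert (INR j * PI * / (2 * INR n) = PI / 2 - (INR n - INR j) * PI * / (2 * INR n)).
  { replace ((INR n - INR j) * PI * / (2 * INR n)) with
      (PI * (INR n * / (2 * INR n)) - INR j * PI * / (2 * INR n)) by ring.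
    rewrite Hv1. field. lra. }
  rewrite H.
  assert (0 < (INR n - INR j) * PI * / (2 * INR n)).
  { apply Rmult_lt_0_compat; [apply Rmult_lt_0_compat|]; lra. }
  lra.
Qed.

Lemma sin_root n j : (2 <= n)%nat -> (1 <= j)%nat -> (j <= n - 1)%nat ->
  sin (INR (S (2 * n - 1)) * (PI / 2 - INR j * PI / (2 * INR n))) = 0.
Proof.
intros hn hj1 hj2.
replace (S (2 * n - 1)) with (2 * n)%nat by lia.
assert (Hn : 0 < INR n) by (apply lt_0_INR; lia).
replace (INR (2 * n) * (PI / 2 - INR j * PI / (2 * INR n))) with (INR (n - j) * PI).
- apply sin_INR_PI.
- rewrite minus_INR by lia. rewrite mult_INR. simpl (INR 2). field. lra.
Qed.

Lemma sin_theta_pos n j : (2 <= n)%nat -> (1 <= j)%nat -> (j <= n - 1)%nat ->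
  0 < sin (INR j * PI / (2 * INR n)).
Proof.
intros hn hj1 hj2. destruct (theta_bounds n j hn hj1 hj2).
apply sin_gt_0; [lra | assert (Hpi := PI_RGT_0); lra].
Qed.

Lemma cos_theta_pos n j : (2 <= n)%nat -> (1 <= j)%nat -> (j <= n - 1)%nat ->
  0 < cos (INR j * PI / (2 * INR n)).
Proof.
intros hn hj1 hj2. destruct (theta_bounds n j hn hj1 hj2).
apply cos_gt_0; lra.
Qed.

Lemma sin_sq_lt n j j' : (2 <= n)%nat -> (1 <= j)%nat -> (j < j')%nat -> (j' <= n - 1)%nat ->
  sin (INR j * PI / (2 * INR n)) ^ 2 < sin (INR j' * PI / (2 * INR n)) ^ 2.
Proof.
intros hn hj1 hjj hj2.
assert (A := theta_bounds n j hn hj1 ltac:(lia)).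
assert (B := theta_bounds n j' hn ltac:(lia) hj2).
assert (P := sin_theta_pos n j hn hj1 ltac:(lia)).
assert (Hn : 0 < INR n) by (apply lt_0_INR; lia).
assert (Hjj : INR j < INR j') by (apply lt_INR; lia).
assert (Hpi := PI_RGT_0).
assert (L : INR j * PI / (2 * INR n) < INR j' * PI / (2 * INR n)).
{ unfold Rdiv. apply Rmult_lt_compat_r. apply Rinv_0_lt_compat; lra.
  apply Rmult_lt_compat_r; lra. }
assert (Hs : sin (INR j * PI / (2 * INR n)) < sin (INR j' * PI / (2 * INR n))) by (apply sin_increasing_1; lra).
simpl. rewrite !Rmult_1_r. apply Rmult_le_0_lt_compat; lra.
Qed.
Definition th (n j : nat) : R := INR j * PI / (2 * INR n).
Definition ssq (n j : nat) : R := sin (th n j) ^ 2.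

Lemma sin_root' p j : (1 <= j)%nat -> (j <= p)%nat ->
  sin (INR (S (S (2 * p))) * (PI / 2 - th (S p) j)) = 0.
Proof.
intros h1 h2. replace (S (S (2 * p))) with (S (2 * S p - 1)) by lia.
apply sin_root; lia.
Qed.

From mathcomp Require Import all_boot all_algebra.
From mathcomp Require Import Rstruct.
From mathcomp Require Import zify ring lra.
Import GRing.Theory Num.Theory.

Section Cheb.
Local Open Scope ring_scope.

Fixpoint chebp (m : nat) : {poly R} * {poly R} :=
  if m is m'.+1 then let: (a, b) := chebp m' in (b, 'X *+ 2 * b - a)
  else (1, 'X *+ 2).
Definition U m := (chebp m).1.

Lemma U0 : U 0 = 1. Proof. by []. Qed.
Lemma U1 : U 1 = 'X *+ 2. Proof. by []. Qed.
Lemma USS m : U m.+2 = 'X *+ 2 * U m.+1 - U m.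
Proof. rewrite /U /=. by case: (chebp m). Qed.

Definition cU (m j : nat) : R :=
  if (j <= m)%N && ~~ odd (m - j) then
    (-1) ^+ (m - j)./2 * ('C(m - (m - j)./2, (m - j)./2))%:R * 2 ^+ j
  else 0.

Lemma cU_even j i : cU (j + i.*2) j = (-1) ^+ i * ('C(j + i, i))%:R * 2 ^+ j.
Proof.
rewrite /cU leq_addr /= addKn odd_double /= doubleK.
by rewrite -addnn addnA addnK.
Qed.

Lemma cU_odd j i : cU (j + i.*2.+1) j = 0.
Proof. by rewrite /cU leq_addr addKn /= odd_double. Qed.

Lemma cU_gt m j : (m < j)%N -> cU m j = 0.
Proof. by rewrite /cU ltnNge => /negbTE ->. Qed.

Lemma parity m : exists i, m = i.*2 \/ m = i.*2.+1.
Proof.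
exists m./2; rewrite -{1 3}(odd_double_half m); case: (odd m); [right|left]; by [].
Qed.

Lemma cU_rec0 m : cU m.+2 0 = - cU m 0.
Proof.
have [i [->|->]] := parity m.
- have -> : (i.*2).+2 = (0 + i.+1.*2)%N by rewrite add0n doubleS.
  rewrite cU_even -[i.*2]add0n cU_even !add0n !binn exprS; ring.
- have -> : (i.*2.+1).+2 = (0 + (i.+1.*2).+1)%N by rewrite add0n doubleS.
  by rewrite cU_odd -[i.*2.+1]add0n cU_odd oppr0.
Qed.
Lemma cU_diag m : cU m m = 2 ^+ m.
Proof. by rewrite /cU leqnn subnn /= subn0 bin0 expr0 !mul1r. Qed.

Lemma cU_rec m j : cU m.+2 j.+1 = 2%:R * cU m.+1 j - cU m j.+1.
Proof.
case: (ltnP m.+1 j) => hj.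
  by rewrite !cU_gt ?mulr0 ?subr0 //; lia.
case: (ltnP m j) => hj2.
  have -> : j = m.+1 by lia.
  rewrite (@cU_gt m) //.
  rewrite !cU_diag subr0 exprS; ring.
have [d hd] : exists d, m = (j + d)%N by exists (m - j)%N; lia.
subst m; have [i [->|->]] := parity d.
- have -> : (j + i.*2).+2 = (j.+1 + i.*2.+1)%N by lia.
  have -> : (j + i.*2).+1 = (j + i.*2.+1)%N by lia.
  rewrite !cU_odd mulr0 sub0r.
  case: i => [|i].
    by rewrite cU_gt ?oppr0 //; lia.
  have -> : (j + i.+1.*2)%N = (j.+1 + i.*2.+1)%N by rewrite doubleS; lia.
  by rewrite cU_odd oppr0.
- have -> : (j + i.*2.+1).+2 = (j.+1 + i.+1.*2)%N by rewrite doubleS; lia.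
  have -> : (j + i.*2.+1).+1 = (j + i.+1.*2)%N by rewrite doubleS; lia.
  have -> : (j + i.*2.+1)%N = (j.+1 + i.*2)%N by lia.
  rewrite !cU_even.
  have -> : (j.+1 + i.+1 = (j + i.+1).+1)%N by lia.
  have -> : (j.+1 + i = (j + i).+1)%N by lia.
  rewrite binS -addnS natrD !exprS; ring.
Qed.
Lemma coef_U m j : (U m)`_j = cU m j.
Proof.
elim: m {-2}m (leqnn m) j => [|M IH] m hm j.
  have -> : m = 0%N by lia.
  rewrite U0 coef1; case: j => [|j]; first by rewrite cU_diag.
  by rewrite cU_gt.
case: m hm => [|[|m]] hm.
- rewrite U0 coef1; case: j => [|j]; first by rewrite cU_diag.
  by rewrite cU_gt.
- rewrite U1 coefMn coefX; case: j => [|[|j]].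
  + by rewrite /cU /= mul0rn.
  + by rewrite /cU /= !mul1r expr1.
  + by rewrite /cU /= mul0rn.
- rewrite USS coefB mulrnAl coefMn coefXM.
  case: j => [|j].
    rewrite /= mul0rn sub0r IH; last lia.
    by rewrite cU_rec0.
  rewrite /= IH; last lia.
  rewrite IH; last lia.
  by rewrite cU_rec mulr_natl.
Qed.
Lemma sin_step' m x : sin (INR m.+2 * x) = (cos x *+ 2) * sin (INR m.+1 * x) - sin (INR m * x).
Proof. by rewrite sin_step RminusE RmultE RplusE mulr2n. Qed.

Lemma U_sin m x : sin (INR m.+1 * x) = sin x * (U m).[cos x].
Proof.
elim: m {-2}m (leqnn m) => [|M IH] m hm.
  have -> : m = 0%N by lia.
  by rewrite U0 hornerC mulr1 sin_INR1.
case: m hm => [|[|m]] hm.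
- by rewrite U0 hornerC mulr1 sin_INR1.
- rewrite U1 hornerMn hornerX sin_step sin_INR1 sin_INR0.
  rewrite RminusE RmultE RplusE R0E mulr2n; ring.
- rewrite sin_step' IH; last lia.
  rewrite IH; last lia.
  rewrite USS hornerD hornerN hornerM hornerMn hornerX.
  ring.
Qed.
Lemma size_U m : size (U m) = m.+1.
Proof.
apply/eqP; rewrite eqn_leq; apply/andP; split.
  by apply/leq_sizeP => j hj; rewrite coef_U cU_gt.
rewrite ltnNge; apply/negP => /leq_sizeP H.
have := H m (leqnn m); rewrite coef_U cU_diag => /eqP.
by rewrite expf_eq0 pnatr_eq0 andbF.
Qed.

Definition W p := odd_poly (U p.*2.+1).

Lemma even_U p : even_poly (U p.*2.+1) = 0.
Proof.
apply/polyP => i; rewrite coef_even_poly coef_U coef0.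
case: (leqP i p) => h.
  have -> : p.*2.+1 = (i.*2 + (p - i).*2.+1)%N by rewrite addnS -doubleD subnKC.
  by rewrite cU_odd.
by rewrite cU_gt // ltn_Sdouble.
Qed.

Lemma U_W p y : (U p.*2.+1).[y] = y * (W p).[y ^+ 2].
Proof.
rewrite -{1}(poly_even_odd (U _)) even_U comp_poly0 add0r hornerM horner_comp.
by rewrite hornerXn hornerX mulrC.
Qed.

Lemma size_W p : size (W p) = p.+1.
Proof.
rewrite /W size_odd_poly_eq size_U.
  by rewrite -[p.*2.+2]/((p.+1).*2) doubleK.
by rewrite /= negbK odd_double.
Qed.

Lemma coef_W p i : (W p)`_i = cU p.*2.+1 i.*2.+1.
Proof. by rewrite coef_odd_poly coef_U. Qed.

Lemma lead_W p : lead_coef (W p) = 2 ^+ p.*2.+1.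
Proof. by rewrite lead_coefE size_W coef_W cU_diag. Qed.

Lemma coef_W' p m : (m <= p)%N ->
  (W p)`_(p - m) = (-1) ^+ m * ('C(p.*2.+1 - m, m))%:R * 2 ^+ (p - m).*2.+1.
Proof.
move=> hm; rewrite coef_W.
have -> : p.*2.+1 = ((p - m).*2.+1 + m.*2)%N.
  by rewrite addSn -doubleD subnK.
rewrite cU_even; congr (_ * _%:R * _); congr 'C(_, _).
rewrite -!addnn; lia.
Qed.

Lemma esymS k x l : Defs.esym k.+1 (x :: l) = Defs.esym k.+1 l + x * Defs.esym k l.
Proof. by []. Qed.
Lemma esym0 l : Defs.esym 0 l = 1.
Proof. by case: l. Qed.
Lemma esym_big l k : (size l < k)%N -> Defs.esym k l = 0.
Proof.
elim: l k => [|x l IH] [|k] h; first by [].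
- by [].
- by [].
rewrite esymS IH; last by apply: leq_trans h.
by rewrite IH ?mulr0 ?addr0.
Qed.

Lemma vieta l m : (m <= size l)%N ->
  (\prod_(z <- l) ('X - z%:P))`_(size l - m) = (-1) ^+ m * Defs.esym m l.
Proof.
elim: l m => [|x l IH] m hm.
  move: hm; rewrite leqn0 => /eqP ->.
  by rewrite big_nil coef1 esym0 mulr1.
rewrite big_cons mulrBl coefB coefXM coefCM.
have E0 : (\prod_(z <- l) ('X - z%:P))`_(size l) = 1.
  by have := IH 0%N (leq0n _); rewrite subn0 esym0 mulr1.
case: m hm => [|m] hm.
  rewrite subn0 [size (x :: l)]/= E0 esym0 expr0 mulr1.
  have -> : (\prod_(z <- l) ('X - z%:P))`_(size l).+1 = 0.
    have /leq_sizeP H : leq (size (\prod_(z <- l) ('X - z%:P))) (size l).+1.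
      by rewrite size_prod_XsubC.
    by rewrite H.
  by rewrite mulr0 subr0.
rewrite [size (x :: l)]/= subSS esymS.
case: (ltnP m (size l)) => h.
  have -> : (size l - m == 0)%N = false by apply/negbTE; rewrite subn_eq0 -ltnNge.
  have -> : (size l - m).-1 = (size l - m.+1)%N by lia.
  rewrite IH // IH; last lia.
  rewrite exprS; ring.
have -> : m = size l by apply/eqP; rewrite eqn_leq h andbT; exact: hm.
rewrite subnn eqxx -[0%N](subnn (size l)) IH // (@esym_big l _ (ltnSn (size l)) : Defs.esym _ l = 0) exprS; ring.
Qed.
Lemma esym_inv l k : all (fun x => x != 0) l -> (k <= size l)%N ->
  Defs.esym k (map GRing.inv l) * Defs.esym (size l) l = Defs.esym (size l - k) l.
Proof.
elim: l k => [|x l IH] k hl hk.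
  move: hk; rewrite leqn0 => /eqP ->.
  by rewrite !esym0 mulr1.
move: hl => /andP [hx hl].
case: k hk => [|k] hk.
  by rewrite esym0 mul1r subn0.
rewrite [map _ _]/= [size (x :: l)]/= subSS !esymS (@esym_big l (size l).+1) // add0r.
case: (ltnP k (size l)) => h.
  have -> : (size l - k = (size l - k.+1).+1)%N by lia.
  rewrite esymS.
  have e1 := IH k.+1 hl h.
  have e2 := IH k hl (ltnW h).
  have -> : (size l - k.+1).+1 = (size l - k)%N by lia.
  rewrite -e1 -e2. field. exact: hx.
have -> : k = size l by apply/eqP; rewrite eqn_leq h andbT; exact: hk.
rewrite subnn esym0 (@esym_big _ (size l).+1); last by rewrite size_map.
have e2 := IH (size l) hl (leqnn _).
rewrite subnn esym0 in e2.
rewrite add0r -e2. field. exact: hx.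
Qed.
Lemma root_W p j : (1 <= j <= p)%N -> root (W p) (ssq p.+1 j).
Proof.
move=> /andP [h1 h2].
have hs : sin (th p.+1 j) != 0.
  by apply/eqP; apply: Rgt_not_eq; apply: sin_theta_pos; lia.
have hc : cos (th p.+1 j) != 0.
  by apply/eqP; apply: Rgt_not_eq; apply: cos_theta_pos; lia.
have E := sin_root' p j ltac:(lia) ltac:(lia).
have e : S (S (2 * p)) = (p.*2.+1).+1 by rewrite -muln2; lia.
rewrite e in E.
rewrite U_sin cos_shift sin_shift in E.
move/eqP: E; rewrite mulf_eq0 (negbTE hc) /= U_W mulf_eq0 (negbTE hs) /=.
by rewrite /root /ssq RpowE.
Qed.
Definition rs p := map (ssq p.+1) (iota 1 p).

Lemma uniq_rs p : uniq (rs p).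
Proof.
rewrite /rs map_inj_in_uniq ?iota_uniq // => a b.
rewrite !mem_iota => /andP [ha1 ha2] /andP [hb1 hb2] E.
case: (ltngtP a b) => // h.
- have := sin_sq_lt (S p) a b ltac:(lia) ltac:(lia) ltac:(lia) ltac:(lia).
  by rewrite -/(ssq _ a) -/(ssq _ b) E => /Rlt_irrefl.
- have := sin_sq_lt (S p) b a ltac:(lia) ltac:(lia) ltac:(lia) ltac:(lia).
  by rewrite -/(ssq _ a) -/(ssq _ b) E => /Rlt_irrefl.
Qed.

Lemma W_fact p : W p = 2 ^+ p.*2.+1 *: \prod_(z <- rs p) ('X - z%:P).
Proof.
rewrite -lead_W; apply: all_roots_prod_XsubC.
- by rewrite size_W size_map size_iota.
- apply/allP => y /mapP [j]; rewrite mem_iota => hj ->.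
  apply: root_W; lia.
- by rewrite uniq_rootsE uniq_rs.
Qed.

Lemma esym_rs p m : (m <= p)%N ->
  Defs.esym m (rs p) * 2 ^+ p.*2.+1 = ('C(p.*2.+1 - m, m))%:R * 2 ^+ (p - m).*2.+1.
Proof.
move=> hm.
have E := @coef_W' p m hm.
rewrite W_fact coefZ in E.
have e : (p - m)%N = (size (rs p) - m)%N by rewrite size_map size_iota.
have E2 : (\prod_(z <- rs p) ('X - z%:P))`_(p - m) = (-1) ^+ m * Defs.esym m (rs p).
  by rewrite e vieta // size_map size_iota.
rewrite E2 in E.
apply: (mulfI (x:=(-1)^+m)); first by rewrite signr_eq0.
rewrite [RHS]mulrA -E; ring.
Qed.
Lemma size_rs p : size (rs p) = p.
Proof. by rewrite size_map size_iota. Qed.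

Lemma rs_nz p : all (fun x => x != 0) (rs p).
Proof.
apply/allP => y /mapP [j]; rewrite mem_iota => hj ->.
apply/eqP; apply: Rgt_not_eq; rewrite /ssq; apply: pow_lt.
apply: sin_theta_pos; lia.
Qed.

Lemma main_mc p k : (k <= p)%N ->
  Defs.esym k (map GRing.inv (rs p)) =
  4%:R ^+ k * ((p.+1 + k)`!)%:R * (p`!)%:R /
  (((k.*2.+1)`!)%:R * ((p - k)`!)%:R * ((p.+1)`!)%:R).
Proof.
move=> hk.
have hk' : (k <= size (rs p))%N by rewrite size_rs.
have hinv := @esym_inv (rs p) k (rs_nz p) hk'.
rewrite size_rs in hinv.
have ep := @esym_rs p p (leqnn p).
have ee1 : (p.*2.+1 - p = p.+1)%N by rewrite -addnn; lia.
rewrite ee1 in ep.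
rewrite binSn subnn in ep.
have eq := @esym_rs p (p - k) (leq_subr k p).
have ee2 : (p.*2.+1 - (p - k) = p.+1 + k)%N by rewrite -addnn; lia.
rewrite ee2 in eq.
have ee3 : (p - (p - k) = k)%N by lia.
rewrite ee3 in eq.
have hb : (p - k <= p.+1 + k)%N by lia.
have bf := @bin_fact (p.+1 + k) (p - k) hb.
have ee4 : (p.+1 + k - (p - k) = k.*2.+1)%N by rewrite -addnn; lia.
rewrite ee4 in bf.
rewrite -bf (factS p).
have f1 : (((p - k)`!)%:R : R) != 0 by rewrite pnatr_eq0 -lt0n fact_gt0.
have f2 : (((k.*2.+1)`!)%:R : R) != 0 by rewrite pnatr_eq0 -lt0n fact_gt0.
have f3 : ((p`!)%:R : R) != 0 by rewrite pnatr_eq0 -lt0n fact_gt0.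
move: f1 f2 f3.
set a := (p - k)`!; set b := (k.*2.+1)`!; set c := p`!.
clearbody a b c.
move=> f1 f2 f3.
rewrite !natrM.
set e := Defs.esym k _ in hinv *.
have key : e * ((p.+1)%:R * 2) = ('C(p.+1 + k, p - k))%:R * 2 ^+ k.*2.+1.
  have := congr1 (fun x => x * 2 ^+ p.*2.+1) hinv.
  rewrite /= -mulrA ep eq expr1 => <-; by [].
have nz2 : (2%:R : R) != 0 by rewrite pnatr_eq0.
have nzp : ((p.+1)%:R : R) != 0 by rewrite pnatr_eq0.
have -> : e = ('C(p.+1 + k, p - k))%:R * 2 ^+ k.*2.+1 / ((p.+1)%:R * 2).
  by rewrite -key mulfK // mulf_neq0.
have -> : (4%:R : R) = 2 ^+ 2 by rewrite -natrX.
rewrite -mul2n exprS exprM.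
field.
by rewrite f1 f2 f3 addrC natr1 nzp.
Qed.
End Cheb.

Open Scope R_scope.

Lemma list_map_eq (A B : Type) (f : A -> B) (l : list A) : List.map f l = map f l.
Proof. by elim: l => //= x l ->. Qed.

Lemma list_seq_eq a b : List.seq a b = iota a b.
Proof. by elim: b a => //= b IH a; rewrite IH. Qed.

Theorem mainTheorem9 (n k : nat) (hn : (2 <= n)%coq_nat) (hk : (k <= (n - 1)%coq_nat)%coq_nat) :
  Defs.esym k (List.map (fun j : nat => csc2 (INR j * PI / (2 * INR n))) (List.seq 1 (n - 1)%coq_nat))
  = (4 ^ k * INR (fact (n + k)%coq_nat) * INR (fact (n - 1)%coq_nat))
    / (INR (fact (Nat.add (Nat.mul 2 k) 1)) * INR (fact (Nat.sub (Nat.sub n k) 1)) * INR (fact n)).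
Proof.
change (Defs.esym k (List.map (fun j : nat => csc2 (INR j * PI / (2 * INR n))) (List.seq 1 (n - 1)))
  = (4 ^ k * INR (fact (n + k)) * INR (fact (n - 1)))
    / (INR (fact (2 * k + 1)) * INR (fact (n - k - 1)) * INR (fact n))).
case: n hn hk => [|p] hn hk; first by lia.
have e1 : (p.+1 - 1 = p)%N by lia.
rewrite e1 list_seq_eq list_map_eq.
have -> : map (fun j : nat => csc2 (INR j * PI / (2 * INR p.+1))) (iota 1 p)
        = map GRing.inv (rs p) by rewrite /rs -map_comp.
rewrite main_mc; last by lia.
rewrite !RdivE !RmultE RpowE !INRE !factE.
have e4 : IZR 4 = (4%:R)%R by rewrite IZRposE INRE.
have e5 : (2 * k + 1 = k.*2.+1)%N by rewrite -mul2n addn1.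
have e6 : (p.+1 - k - 1 = p - k)%N by lia.
by rewrite e4 e5 e6.
Qed.
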